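(* Assume that for Lebesgue-almost every irrational $\alpha\in(0,1)$ and every $c\in(0,1]$ one has $F_+^\alpha(c)=F_-^\alpha(c)$. Then for almost every $\alpha$, the function $c\mapsto F^\alpha(c):=\lim_{n\to\infty}S(\alpha,n,cn)^{1/cn}$ is continuous on $(0,1]$.
   Context: Every irrational $\alpha\in(0,1)$ has a unique continued fraction expansion $\alpha = 1/(a_1(\alpha)+1/(a_2(\alpha)+\cdots))$ with digits $a_i(\alpha)\in\mathbb{N}_{\ge1}$. For $1\le k\le n$ integers, \[ S(\alpha,n,k) := \binom{n}{k}^{-1}\sum_{1\le i_1<\cdots<i_k\le n} a_{i_1}(\alpha)\cdots a_{i_k}(\alpha), \] and $S(\alpha,n,cn)^{1/cn}$ means $S(\alpha,n,\lceil cn\rceil)^{1/\lceil cn\rceil}$. Define $F_+^\alpha(c)=\limsup_{n\to\infty}S(\alpha,n,cn)^{1/cn}$ and $F_-^\alpha(c)=\liminf_{n\to\infty}S(\alpha,n,cn)^{1/cn}$. *)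

(* Defs.v *)
From HB Require Import structures.
From mathcomp Require Import all_boot all_order all_algebra.
From mathcomp Require Import all_classical all_reals all_analysis.
Set Implicit Arguments. Unset Strict Implicit. Unset Printing Implicit Defensive.
Import Order.TTheory GRing.Theory Num.Theory.
Import numFieldNormedType.Exports.
Local Open Scope ring_scope.
Local Open Scope classical_set_scope.

Section CF.
Variable R : realType.

Definition gauss (x : R) : R := x^-1 - (Num.floor (x^-1))%:~R.

Definition cf_digit (x : R) (i : nat) : R :=
  (Num.floor ((iter i.-1 gauss x)^-1))%:~R.

Definition S_sym (alpha : R) (n k : nat) : R :=
  ('C(n, k)%:R)^-1 *
  \sum_(A : {set 'I_n} | #|A| == k) \prod_(i in A) cf_digit alpha (val i).+1.

Definition kceil (c : R) (n : nat) : nat := `|Num.ceil (c * n%:R)|%N.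

(* the sequence n |-> S(alpha, n, cn)^{1/cn} = S(alpha,n,ceil(cn))^{1/ceil(cn)} *)
Definition Sseq (alpha c : R) (n : nat) : R :=
  S_sym alpha n (kceil c n) `^ ((kceil c n)%:R)^-1.

Definition Fplus (alpha c : R) : \bar R := limn_esup (fun n => (Sseq alpha c n)%:E).
Definition Fminus (alpha c : R) : \bar R := limn_einf (fun n => (Sseq alpha c n)%:E).

Definition Flim (alpha c : R) : \bar R := lim ((fun n => (Sseq alpha c n)%:E) @ \oo).


End CF.

(* Main.v *)
Require Import Defs.
From HB Require Import structures.
From mathcomp Require Import all_boot all_order all_algebra.
From mathcomp Require Import all_classical all_reals all_analysis.
From mathcomp Require Import ring lra.
Import Order.TTheory GRing.Theory Num.Theory.
Import numFieldNormedType.Exports.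
Local Open Scope ring_scope.
Local Open Scope classical_set_scope.

Section Digits.
Variable R : realType.

Lemma irr_inv (x : R) : irrational x -> irrational x^-1.
Proof.
move=> hx [q _ hq]; apply: hx; exists q^-1 => //.
by rewrite fmorphV /= hq invrK.
Qed.

Lemma irr_subint (x : R) (z : int) : irrational x -> irrational (x - z%:~R).
Proof.
move=> hx [q _ hq]; apply: hx; exists (q + z%:~R) => //.
by rewrite rmorphD /= hq ratr_int subrK.
Qed.

Lemma irr_neq0 (x : R) : irrational x -> x != 0.
Proof. by move=> hx; apply/eqP => x0; apply: hx; exists 0 => //; rewrite rmorph0. Qed.

Lemma gauss_ok (x : R) : 0 < x < 1 -> irrational x ->
  (0 < gauss x < 1) /\ irrational (gauss x).
Proof.
move=> /andP[x0 x1] hx.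
have hi := irr_inv _ hx.
have hg : irrational (gauss x) by exact: (irr_subint _ _ hi).
split => //; apply/andP; split.
  rewrite lt_neqAle eq_sym irr_neq0 //= subr_ge0.
  exact: Num.Theory.floor_le.
rewrite /gauss ltrBlDl addrC.
by have := Num.Theory.floorD1_gt x^-1; rewrite intrD addrC.
Qed.

Lemma iter_gauss_ok (x : R) n : 0 < x < 1 -> irrational x ->
  (0 < iter n (@gauss R) x < 1) /\ irrational (iter n (@gauss R) x).
Proof.
move=> h1 h2; elim: n => [|n [IH1 IH2]] //=; exact: gauss_ok.
Qed.

Lemma cf_digit_ge1 (x : R) i : 0 < x < 1 -> irrational x -> 1 <= cf_digit x i.
Proof.
move=> h1 h2; have [/andP[y0 y1] _] := iter_gauss_ok _ i.-1 h1 h2.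
rewrite /cf_digit; set y := iter _ _ _ in y0 y1 *.
have : 1 <= y^-1 by rewrite invf_ge1 // ltW.
move=> hy.
have : 1 <= Num.floor y^-1.
  by rewrite Num.Theory.floor_ge_int.
by move=> h; rewrite -[1]/(1%:~R) ler_int.
Qed.
End Digits.

Lemma newton_alg (R : realType) (N K x U0 U1 U2 U3 : R) : 1 <= K -> K <= N -> 0 <= x ->
  U1 * U3 <= U2 ^+ 2 -> (K - 1) * (U0 * U2) <= (K - 1) * U1 ^+ 2 ->
  (K - 1) * (U0 * U3) <= (K - 1) * (U1 * U2) ->
  ((N + 2 - K) * U1 + (K - 1) * x * U0) * ((N - K) * U3 + (K + 1) * x * U2)
   <= ((N + 1 - K) * U2 + K * x * U1) ^+ 2.
Proof.
move=> K1 KN x0 h1 h2 h3.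
have t1 : (N + 2 - K) * (N - K) * (U1 * U3) <= (N + 2 - K) * (N - K) * U2 ^+ 2.
  by apply: ler_wpM2l => //; apply: mulr_ge0; lra.
have t2 : (K + 1) * x ^+ 2 * ((K - 1) * (U0 * U2)) <= (K + 1) * x ^+ 2 * ((K - 1) * U1 ^+ 2).
  by apply: ler_wpM2l => //; apply: mulr_ge0; [lra| exact: sqr_ge0].
have t3 : (N - K) * x * ((K - 1) * (U0 * U3)) <= (N - K) * x * ((K - 1) * (U1 * U2)).
  by apply: ler_wpM2l => //; apply: mulr_ge0; lra.
have t4 : 0 <= (U2 - x * U1) ^+ 2 by exact: sqr_ge0.
nra.
Qed.
Section Sym.
Local Set Implicit Arguments.
Variable R : realType.
Variable x : nat -> R.

Definition Pp n : {poly R} := \prod_(i < n) (1 + (x i)%:P * 'X).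
Definition ee n k := (Pp n)`_k.

Lemma ee0 k : ee 0 k = (k == 0)%:R.
Proof. by rewrite /ee /Pp big_ord0 coef1. Qed.

Lemma eeS n k : ee n.+1 k = ee n k + (if k is k'.+1 then x n * ee n k' else 0).
Proof.
rewrite /ee /Pp big_ord_recr /= mulrDr mulr1 coefD; congr (_ + _).
rewrite mulrA (mulrC _ (x n)%:P) coefMX; case: k => [|k] //=.
by rewrite coefCM.
Qed.

Lemma ee_sum n k :
  \sum_(A : {set 'I_n} | #|A| == k) \prod_(i in A) x (val i) = ee n k.
Proof.
rewrite /ee /Pp.
rewrite (_ : \prod_(i < n) _ = \prod_(i < n) ((x i)%:P * 'X + 1)); last first.
  by apply: eq_bigr => i _; rewrite addrC.
rewrite bigA_distr /= coef_sum.
transitivity (\sum_(J in {set 'I_n}) if #|J| == k then \prod_(i in J) x (val i) else 0).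
  by rewrite big_mkcond.
apply: eq_bigr => J _.
rewrite -big_mkcond /= big_split /= -rmorph_prod /= prodr_const coefCM coefXn.
by rewrite eq_sym; case: eqP; rewrite ?mulr1 ?mulr0.
Qed.

Fixpoint uu n k : R :=
  match n with
  | 0 => (k == 0)%:R
  | n'.+1 => match k with
             | 0 => 1
             | k'.+1 => (((n' - k')%N)%:R * uu n' k'.+1 + (k'.+1)%:R * x n' * uu n' k')
                          / (n'.+1)%:R
             end
  end.

Lemma ee_n0 n : ee n 0 = 1.
Proof. by elim: n => [|n IH]; rewrite ?ee0 // eeS IH addr0. Qed.

Lemma uu_n0 n : uu n 0 = 1.
Proof. by case: n. Qed.

Lemma ee_uu n k : ee n k = ('C(n, k))%:R * uu n k.
Proof.
elim: n k => [|n IH] k.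
  by rewrite ee0 bin0n /=; case: (k == 0); rewrite ?mulr1 ?mulr0.
case: k => [|k]; first by rewrite ee_n0 uu_n0 bin0 mulr1.
rewrite eeS /= !IH.
have hn : (n.+1)%:R != 0 :> R by rewrite pnatr_eq0.
have b1 : ('C(n, k.+1))%:R = ('C(n.+1, k.+1))%:R * ((n - k)%N)%:R / (n.+1)%:R :> R.
  apply: (mulIf hn); rewrite mulfVK // -!natrM; congr (_%:R).
  by have := mul_bin_down n.+1 k.+1; rewrite /= subSS mulnC => ->; rewrite mulnC.
have b2 : ('C(n, k))%:R = ('C(n.+1, k.+1))%:R * (k.+1)%:R / (n.+1)%:R :> R.
  apply: (mulIf hn); rewrite mulfVK // -!natrM; congr (_%:R).
  by have := mul_bin_diag n.+1 k; rewrite /= mulnC => ->; rewrite mulnC.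
by rewrite b1 b2; field; rewrite addrC natr1.
Qed.

Hypothesis hx : forall i, 1 <= x i.

Lemma uu_big n k : (n < k)%N -> uu n k = 0.
Proof.
elim: n k => [|n IH] [|k] //=.
by move=> hk; rewrite !IH ?mulr0 ?addr0 ?mul0r // ltnW.
Qed.

Lemma uu_ge1 n k : (k <= n)%N -> 1 <= uu n k.
Proof.
elim: n k => [|n IH] [|k] //=; rewrite ?uu_n0 // ltnS => hk.
have hn : 0 < (n.+1)%:R :> R by rewrite ltr0n.
rewrite ler_pdivlMr // mul1r.
have e : (n.+1)%:R = ((n - k)%N)%:R + (k.+1)%:R :> R.
  by rewrite -natrD addnS subnK.
have h0 := IH k hk.
have h1 : ((n - k)%N)%:R <= ((n - k)%N)%:R * uu n k.+1 :> R.
  case: (ltnP k n) => hkn; first by apply: ler_peMr; [exact: ler0n| exact: IH].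
  have -> : (n - k = 0)%N by apply/eqP; rewrite subn_eq0.
  by rewrite mul0r.
have h2 : 1 <= x n * uu n k by rewrite -[1]mulr1; apply: ler_pM.
have h3 : (k.+1)%:R <= (k.+1)%:R * x n * uu n k :> R.
  by rewrite -mulrA; apply: ler_peMr; [exact: ler0n|].
rewrite e; lra.
Qed.

Lemma uu_ge0 n k : 0 <= uu n k.
Proof.
case: (leqP k n) => h; last by rewrite uu_big.
have := uu_ge1 _ _ h; lra.
Qed.

Lemma uu_recR n k : (k <= n.+1)%N ->
  (n.+1)%:R * uu n.+1 k = ((n.+1)%:R - k%:R) * uu n k + k%:R * x n * uu n k.-1.
Proof.
case: k => [_|k]; first by rewrite !uu_n0 subr0 !mul0r addr0.
rewrite ltnS => hk /=.
rewrite mulrC divfK ?pnatr_eq0 //.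
by rewrite natrB // -!natr1 opprD addrACA subrr addr0.
Qed.

Lemma uu_mono n k : (k < n)%N -> uu n k <= uu n k.+1.
Proof.
elim: n k => [|n IH] k //; rewrite ltnS => hk.
have hn : 0 < (n.+1)%:R :> R by rewrite ltr0n.
rewrite -(ler_pM2l hn) uu_recR ?(leq_trans hk) // uu_recR ?ltnS //.
have h1 : (n%:R - k%:R) * uu n k <= (n%:R - k%:R) * uu n k.+1.
  case: (ltnP k n) => hkn; first by rewrite ler_wpM2l ?subr_ge0 ?ler_nat ?IH // ltnW.
  have -> : k = n by apply/eqP; rewrite eqn_leq hk hkn.
  by rewrite subrr !mul0r.
have h2 : k%:R * x n * uu n k.-1 <= k%:R * x n * uu n k.
  case: k {h1 hk} (hk) => [|k] hk; first by rewrite !mul0r.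
  by rewrite ler_wpM2l ?mulr_ge0 ?ler0n ?(le_trans _ (hx n)) ?IH.
have h3 : uu n k <= x n * uu n k by apply: ler_peMl; [exact: uu_ge0|].
rewrite -!natr1; nra.
Qed.


Lemma uu_newton n k : (0 < k)%N -> uu n k.-1 * uu n k.+1 <= uu n k ^+ 2.
Proof.
elim: n k => [|n IH] k k0.
  by rewrite (@uu_big 0 k.+1) // mulr0 sqr_ge0.
case: (ltnP n k) => hk.
  by rewrite (@uu_big n.+1 k.+1) // mulr0 sqr_ge0.
case: k k0 hk => [//|k] _ hk /=.
have hn : 0 < (n.+1)%:R :> R by rewrite ltr0n.
have hn2 : 0 < (n.+1)%:R ^+ 2 :> R by rewrite exprn_gt0.
suff key : ((n.+1)%:R * uu n.+1 k) * ((n.+1)%:R * uu n.+1 k.+2) <= ((n.+1)%:R * uu n.+1 k.+1) ^+ 2.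
  by move: key; rewrite mulrACA exprMn -expr2 ler_pM2l.
rewrite uu_recR ?(leq_trans (leq_trans hk (ltnW (ltnSn n)))) //.
rewrite [X in _ * X]uu_recR ?ltnS // [X in _ <= X ^+ 2]uu_recR ?ltnS ?(leq_trans hk) //=.
have h1 := IH k.+1 isT.
have h2 : k%:R * (uu n k.-1 * uu n k.+1) <= k%:R * uu n k ^+ 2 :> R.
  by case: k {hk h1} => [|k]; rewrite ?mul0r // ler_wpM2l // IH.
have h3 : k%:R * (uu n k.-1 * uu n k.+2) <= k%:R * (uu n k * uu n k.+1) :> R.
  case: k {hk h1 h2} (hk) => [|k] hk; rewrite ?mul0r // ler_wpM2l //.
  have a1 := IH k.+1 isT; have a2 := IH k.+2 isT.
  have p1 : 0 < uu n k.+1 by apply: (lt_le_trans ltr01); apply: uu_ge1; exact: ltnW.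
  have p2 : 0 < uu n k.+2 by apply: (lt_le_trans ltr01); apply: uu_ge1.
  have q0 := uu_ge0 n k; have q3 := uu_ge0 n k.+3.
  simpl in a1, a2.
  have : uu n k * uu n k.+3 * (uu n k.+1 * uu n k.+2) <=
         uu n k.+1 * uu n k.+2 * (uu n k.+1 * uu n k.+2).
    have : (uu n k * uu n k.+2) * (uu n k.+1 * uu n k.+3) <= uu n k.+1 ^+ 2 * uu n k.+2 ^+ 2.
      by apply: ler_pM => //; apply: mulr_ge0 => //; exact: uu_ge0.
    by move=> H; apply: le_trans (le_trans _ H) _; rewrite le_eqVlt; apply/orP; left; apply/eqP; ring.
  by rewrite ler_pM2r // mulr_gt0.
have K1 : 1 <= k%:R + 1 :> R by rewrite lerDr ler0n.
have KN : k%:R + 1 <= n%:R :> R by rewrite natr1 ler_nat.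
have x0 : 0 <= x n by apply: le_trans (hx n).
have := @newton_alg R n%:R (k%:R+1) (x n) (uu n k.-1) (uu n k) (uu n k.+1) (uu n k.+2) K1 KN x0 h1; rewrite addrK => /(_ h2 h3) H.
apply: le_trans (le_trans _ H) _; rewrite le_eqVlt; apply/orP; left; apply/eqP;
  rewrite -!natr1; ring.
  by rewrite ltnW.
by rewrite ltnW // ltnW.
Qed.

Lemma uu_gt0 n k : (k <= n)%N -> 0 < uu n k.
Proof. by move=> h; apply: (lt_le_trans ltr01); apply: uu_ge1. Qed.

Lemma uu_mac n k : (0 < k)%N -> uu n k.+1 ^+ k <= uu n k ^+ k.+1.
Proof.
elim: k => [//|k IH] _.
case: k IH => [_|k IH].
  by have := uu_newton n 1 isT; rewrite /= uu_n0 mul1r expr1.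
case: (ltnP n k.+3) => hn.
  by rewrite uu_big // expr0n /= exprn_ge0 // uu_ge0.
have p : 0 < uu n k.+2 by apply: uu_gt0; exact: ltnW.
have N := uu_newton n k.+2 isT; simpl in N.
have N' : (uu n k.+1 * uu n k.+3) ^+ k.+2 <= (uu n k.+2 ^+ 2) ^+ k.+2.
  by rewrite lerXn2r // ?nnegrE ?mulr_ge0 ?exprn_ge0 ?uu_ge0.
have I := IH isT.
have pk : 0 < uu n k.+2 ^+ k.+1 by rewrite exprn_gt0.
rewrite -(ler_pM2l pk).
apply: le_trans (_ : uu n k.+1 ^+ k.+2 * uu n k.+3 ^+ k.+2 <= _).
  by rewrite ler_wpM2r ?exprn_ge0 ?uu_ge0.
move: N'; rewrite exprMn -exprM -exprD.
by rewrite (_ : (k.+1 + k.+3 = 2 * k.+2)%N) // mul2n -addnn !addSn !addnS.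
Qed.

Lemma w_step n k : (0 < k)%N -> (k.+1 <= n)%N ->
  ln (uu n k.+1) / k.+1%:R <= ln (uu n k) / k%:R.
Proof.
move=> k0 hk.
have p0 : 0 < uu n k by apply: uu_gt0; exact: ltnW.
have p1 : 0 < uu n k.+1 by apply: uu_gt0.
have := uu_mac n k k0.
rewrite -ler_ln ?posrE ?exprn_gt0 // !lnXn // -[ln _ *+ k]mulr_natr -[ln _ *+ k.+1]mulr_natr => h.
have k1 : 0 < k%:R :> R by rewrite ltr0n.
have k2 : 0 < k.+1%:R :> R by rewrite ltr0n.
rewrite ler_pdivrMr // mulrAC ler_pdivlMr //.
Qed.

Lemma w_anti n j k : (0 < j)%N -> (j <= k)%N -> (k <= n)%N ->
  ln (uu n k) / k%:R <= ln (uu n j) / j%:R.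
Proof.
move=> j0; elim: k => [|k IH] jk kn; first by rewrite leqn0 in jk; rewrite (eqP jk) in j0.
case: (ltngtP j k.+1) jk => // [jk _|<- _]; last by [].
rewrite ltnS in jk.
apply: le_trans (IH jk (ltnW kn)).
by apply: w_step => //; apply: leq_trans jk.
Qed.

Lemma uu_mono2 n j k : (j <= k)%N -> (k <= n)%N -> uu n j <= uu n k.
Proof.
elim: k => [|k IH] jk kn; first by rewrite leqn0 in jk; rewrite (eqP jk).
case: (ltngtP j k.+1) jk => // [jk _|<- _]; last by [].
rewrite ltnS in jk.
exact: le_trans (IH jk (ltnW kn)) (uu_mono _ _ kn).
Qed.

End Sym.


Lemma cvg_esup_einf (R : realType) (u : (\bar R)^nat) :
  limn_einf u = limn_esup u -> u @ \oo --> limn_esup u.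
Proof.
move=> h.
apply: (@squeeze_cvge _ _ _ _ (einfs u) u (esups u)).
- apply: nearW => n; apply/andP; split.
    by apply: ereal_inf_lbound; exists n => /=.
  by apply: ereal_sup_ubound; exists n => /=.
- rewrite -h limn_einf_lim; exact: is_cvg_einfs.
- rewrite limn_esup_lim; exact: is_cvg_esups.
Qed.

Lemma ratio_alg (R : realType) (a b k k' c c' N : R) : 0 < c -> 1 <= N -> 0 <= a -> 0 <= b ->
  k * a <= k' * b -> c * N <= k -> k' <= c' * N + 1 ->
  a <= (c' / c + 2 / c * (N + 1)^-1) * b.
Proof.
move=> c0 N1 a0 b0 h hk hk'.
have h1 : a * (c * N) <= (c' * N + 1) * b by nra.
have N0 : 0 < N by lra.
have e : c' / c + 2 / c * (N + 1)^-1 = (c' * N * (N + 1) + 2 * N) / (c * N * (N + 1)).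
  by field; apply/andP; split; [lra|]; apply/andP; split; lra.
have d0 : 0 < c * N * (N + 1) by apply: mulr_gt0; [apply: mulr_gt0|]; lra.
rewrite e mulrAC ler_pdivlMr //.
have h2 : a * (c * N) * (N + 1) <= (c' * N + 1) * b * (N + 1) by rewrite ler_wpM2r //; lra.
nra.
Qed.

Lemma cont_g (R : realType) (g : R -> R) (x : R) : 0 < x <= 1 ->
  (forall c, 0 < c <= 1 -> 0 <= g c) ->
  (forall c c', 0 < c -> c < c' -> c' <= 1 -> g c' <= g c /\ c * g c <= c' * g c') ->
  g @ within `]0, 1] (nbhs x) --> g x.
Proof.
move=> /andP[x0 x1] g0 gm.
apply/cvgrPdist_lt => e e0.
have G0 : 0 <= g x by apply: g0; rewrite x0 x1.
set G := g x in G0 *.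
have dd0 : 0 < e * x / (2 * G + 2) by apply: divr_gt0; [apply: mulr_gt0|lra].
rewrite near_withinE; apply/nbhs_ballP.
exists (Num.min (x / 2) (e * x / (2 * G + 2))).
  by rewrite /= lt_min dd0 andbT; lra.
move=> t; rewrite /ball /= lt_min => /andP[hd1 hd2]; rewrite in_itv /= => /andP[t0 t1].
have hd3 : `|x - t| * (2 * G + 2) < e * x by rewrite -ltr_pdivlMr //; lra.
have D0 := normr_ge0 (x - t).
suff key : `|G - g t| * x <= 2 * `|x - t| * G.
  rewrite -(ltr_pM2r x0); apply: le_lt_trans key _; nra.
case: (ltgtP t x) => htx.
- have [h1 h2] := gm t x t0 htx x1; rewrite -/G in h1 h2.
  rewrite [`|G - g t|]ler0_norm ?subr_le0 // [`|x - t|]ger0_norm ?subr_ge0 ?(ltW htx) //.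
  have ht2 : x <= 2 * t by move: hd1; rewrite ger0_norm ?subr_ge0 ?(ltW htx) //; lra.
  have hh : 0 <= (g t - G) * (2 * t - x) by apply: mulr_ge0; lra.
  nra.
- have [h1 h2] := gm x t x0 htx t1; rewrite -/G in h1 h2.
  rewrite [`|G - g t|]ger0_norm ?subr_ge0 // [`|x - t|]ler0_norm ?subr_le0 ?(ltW htx) //.
  nra.
- by rewrite htx /G subrr normr0 mul0r mulr_ge0 ?mulr_ge0.
Qed.

Section Kceil.
Variable R : realType.

Lemma kceilE (c : R) n : 0 <= c -> (kceil c n)%:R = (Num.ceil (c * n%:R))%:~R :> R.
Proof.
move=> c0; rewrite /kceil natr_absz ger0_norm //.
by rewrite Num.Theory.ceil_ge0 (lt_le_trans (_ : -1 < 0)) ?mulr_ge0 ?ler0n // ltrN10.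
Qed.

Lemma kceil_ge (c : R) n : 0 <= c -> c * n%:R <= (kceil c n)%:R.
Proof. by move=> c0; rewrite kceilE // Num.Theory.ceil_ge. Qed.

Lemma kceil_lt (c : R) n : 0 <= c -> (kceil c n)%:R < c * n%:R + 1.
Proof.
move=> c0; rewrite kceilE //; have := Num.Theory.ceilB1_lt (c * n%:R).
by rewrite intrD /=; lra.
Qed.

Lemma kceil_le_n (c : R) n : 0 <= c <= 1 -> (kceil c n <= n)%N.
Proof.
move=> /andP[c0 c1]; rewrite -ltnS -(ltr_nat R).
apply: (lt_le_trans (kceil_lt c n c0)); rewrite -natr1 lerD2r.
by rewrite ler_piMl ?ler0n.
Qed.

Lemma kceil_gt0 (c : R) n : 0 < c -> (0 < n)%N -> (0 < kceil c n)%N.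
Proof.
move=> c0 n0; rewrite -(ltr_nat R).
by apply: (lt_le_trans _ (kceil_ge c n (ltW c0))); rewrite mulr_gt0 ?ltr0n.
Qed.

Lemma kceil_mono (c c' : R) n : 0 <= c -> c <= c' -> (kceil c n <= kceil c' n)%N.
Proof.
move=> c0 cc'; rewrite -(ler_nat R) !kceilE ?(le_trans c0) // ler_int.
by apply: Num.Theory.le_ceil; rewrite ler_wpM2r ?ler0n.
Qed.
End Kceil.

Section Alpha.
Variable R : realType.
Variable alpha : R.
Hypothesis h01 : 0 < alpha < 1.
Hypothesis hirr : irrational alpha.

Let xa := fun i => cf_digit alpha i.+1.
Let hx : forall i, 1 <= xa i := fun i => cf_digit_ge1 R alpha i.+1 h01 hirr.
Let K (c : R) n := kceil c n.

Lemma S_uu n k : (k <= n)%N -> S_sym alpha n k = uu R xa n k.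
Proof.
move=> kn; rewrite /S_sym (ee_sum R xa n k) ee_uu mulKf //.
by rewrite pnatr_eq0 -lt0n bin_gt0.
Qed.

Lemma Sseq_ge1 c n : 0 < c <= 1 -> 1 <= Sseq alpha c n.
Proof.
move=> /andP[c0 c1]; rewrite /Sseq S_uu ?kceil_le_n ?(ltW c0) //.
have u1 : 1 <= uu R xa n (kceil c n) by rewrite uu_ge1 // kceil_le_n // (ltW c0) c1.
have := ler_powR u1 (_ : 0 <= ((kceil c n)%:R)^-1); rewrite powRr0; apply.
by rewrite invr_ge0 ler0n.
Qed.

Lemma lnSseq c n : 0 < c <= 1 ->
  ln (Sseq alpha c n) = ln (uu R xa n (K c n)) / (K c n)%:R.
Proof.
move=> /andP[c0 c1]; rewrite /Sseq S_uu; last by rewrite kceil_le_n // (ltW c0) c1.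
by rewrite ln_powR mulrC.
Qed.

Lemma Sseq_gt0 c n : 0 < c <= 1 -> 0 < Sseq alpha c n.
Proof. by move=> h; apply: (lt_le_trans ltr01); apply: Sseq_ge1. Qed.

Lemma Sseq_anti c c' n : 0 < c -> c <= c' -> c' <= 1 -> (0 < n)%N ->
  Sseq alpha c' n <= Sseq alpha c n.
Proof.
move=> c0 cc c1 n0.
have c'0 : 0 < c' by apply: lt_le_trans cc.
have h1 : 0 < c <= 1 by rewrite c0 (le_trans cc).
have h2 : 0 < c' <= 1 by rewrite c'0.
rewrite -ler_ln ?posrE ?Sseq_gt0 // !lnSseq //.
apply: w_anti => //; first exact: kceil_gt0.
  exact: kceil_mono _ _ _ _ (ltW c0) cc.
by rewrite kceil_le_n // (ltW c'0).
Qed.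

Lemma Sseq_ratio c c' n : 0 < c -> c <= c' -> c' <= 1 -> (0 < n)%N ->
  (K c n)%:R * ln (Sseq alpha c n) <= (K c' n)%:R * ln (Sseq alpha c' n).
Proof.
move=> c0 cc c1 n0.
have c'0 : 0 < c' by apply: lt_le_trans cc.
have h1 : 0 < c <= 1 by rewrite c0 (le_trans cc).
have h2 : 0 < c' <= 1 by rewrite c'0.
rewrite !lnSseq // ![_%:R * (_ / _)]mulrC !divfK ?pnatr_eq0 -?lt0n ?kceil_gt0 //.
have k1 := kceil_gt0 _ _ _ c0 n0.
rewrite ler_ln ?posrE ?uu_gt0 ?kceil_le_n ?(ltW c0) ?(ltW c'0) //.
apply: uu_mono2 => //; first exact: kceil_mono _ _ _ _ (ltW c0) cc.
by rewrite kceil_le_n // (ltW c'0).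
by rewrite (le_trans cc c1).
Qed.

Hypothesis Hc : forall c : R, 0 < c <= 1 -> Fplus alpha c = Fminus alpha c.

Lemma Fcvg c : 0 < c <= 1 -> (fun n => (Sseq alpha c n)%:E) @ \oo --> Flim alpha c.
Proof.
move=> hc; have H := cvg_esup_einf _ _ (esym (Hc c hc)).
by rewrite /Flim (cvg_lim _ H).
Qed.

Lemma F_ge1 c : 0 < c <= 1 -> (1%:E <= Flim alpha c)%E.
Proof.
move=> hc; apply: lime_ge; first exact: cvgP (Fcvg _ hc).
by apply: nearW => n; rewrite lee_fin Sseq_ge1.
Qed.

Lemma F_anti c c' : 0 < c -> c <= c' -> c' <= 1 -> (Flim alpha c' <= Flim alpha c)%E.
Proof.
move=> c0 cc c1.
have h1 : 0 < c <= 1 by rewrite c0 (le_trans cc).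
have h2 : 0 < c' <= 1 by rewrite (lt_le_trans c0 cc).
apply: lee_lim; [exact: cvgP (Fcvg _ h2)|exact: cvgP (Fcvg _ h1)|].
exists 1%N => // n /= n0; rewrite lee_fin; exact: Sseq_anti.
Qed.

Lemma F_fin c c' r' : 0 < c -> c < c' -> c' <= 1 -> Flim alpha c' = r'%:E ->
  exists r, Flim alpha c = r%:E /\ c * ln r <= c' * ln r'.
Proof.
move=> c0 cc c1 hr'.
have h1 : 0 < c <= 1 by rewrite c0 (le_trans (ltW cc)).
have h2 : 0 < c' <= 1 by rewrite (lt_trans c0 cc).
have r'1 : 1 <= r' by rewrite -lee_fin -hr'; exact: F_ge1.
have r'0 : 0 < r' by lra.
have cvS : Sseq alpha c' n @[n --> \oo] --> r'.
  have := Fcvg _ h2; rewrite hr' => /fine_cvgP[_ H]; exact: H.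
have cvL : ln (Sseq alpha c' n) @[n --> \oo] --> ln r'.
  by apply: (cvg_comp _ _ cvS); exact: continuous_ln.
have cvH : (c' / c + 2 / c * harmonic n) @[n --> \oo] --> c' / c.
  rewrite -[X in _ --> X]addr0; apply: cvgD; first exact: cvg_cst.
  rewrite -(mulr0 (2 / c)); apply: cvgM; [exact: cvg_cst|exact: cvg_harmonic].
have cvB : ((c' / c + 2 / c * harmonic n) * ln (Sseq alpha c' n)) @[n --> \oo] --> c' / c * ln r'.
  exact: cvgM cvH cvL.
have cvE : expR ((c' / c + 2 / c * harmonic n) * ln (Sseq alpha c' n)) @[n --> \oo]
    --> expR (c' / c * ln r').
  by apply: (cvg_comp _ _ cvB); exact: continuous_expR.
have cvE' : (expR ((c' / c + 2 / c * harmonic n) * ln (Sseq alpha c' n)))%:E @[n --> \oo]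
    --> (expR (c' / c * ln r'))%:E.
  by apply/fine_cvgP; split; [exact: nearW|exact: cvE].
have bnd : (Flim alpha c <= (expR (c' / c * ln r'))%:E)%E.
  rewrite -(cvg_lim _ cvE') //.
  apply: lee_lim; [exact: cvgP (Fcvg _ h1)|exact: cvgP cvE'|].
  exists 1%N => // n /= n0; rewrite lee_fin.
  rewrite -[Sseq alpha c n]lnK ?posrE ?Sseq_gt0 // ler_expR.
  have H := @ratio_alg R (ln (Sseq alpha c n)) (ln (Sseq alpha c' n)) (K c n)%:R (K c' n)%:R
    c c' n%:R c0.
  rewrite natr1 in H; apply: H.
  - by rewrite ler1n.
  - by rewrite ln_ge0 // Sseq_ge1.
  - by rewrite ln_ge0 // Sseq_ge1.
  - exact: Sseq_ratio (ltW cc) c1 n0.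
  - exact: kceil_ge (ltW c0).
  - by rewrite ltW // kceil_lt // (ltW (lt_trans c0 cc)).
have g1 := F_ge1 _ h1.
move: bnd g1; case: (Flim alpha c) => [r||] //= bnd g1; exists r; split => //.
rewrite lee_fin in bnd; rewrite lee_fin in g1.
rewrite -ler_ln ?posrE ?expR_gt0 // in bnd; last by lra.
rewrite expRK in bnd.
by rewrite mulrAC ler_pdivlMr // mulrC in bnd.
Qed.

Lemma Flim_cont : {within `]0, 1], continuous (Flim alpha)}.
Proof.
have hA : forall c : R, c \in `]0, 1]%classic -> 0 < c <= 1.
  by move=> c; rewrite inE /= in_itv.
have one : 0 < (1 : R) <= 1 by rewrite ltr01 lexx.
have [[r1 E1]|E1] : (exists r1, Flim alpha 1 = r1%:E) \/ Flim alpha 1 = +oo%E.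
  by case: (Flim alpha 1) (F_ge1 _ one) => [r1| |] //= _; [left; exists r1|right].
2: {
  apply: (subspace_eq_continuous (f := fun _ => +oo%E)); last exact: cst_continuous.
  move=> c /hA /andP[c0 c1]; have := F_anti c 1 c0 c1 (lexx 1).
  by rewrite E1 leye_eq => /eqP E; rewrite /from_subspace E. }
have [f fin] : exists f : R -> R, forall c, 0 < c <= 1 -> Flim alpha c = (f c)%:E.
  exists (fun c => fine (Flim alpha c)) => c /andP[c0 c1].
  case: (eqVneq c 1) => [->|cn1]; first by rewrite E1.
  have c1' : c < 1 by rewrite lt_neqAle cn1 c1.
  by have [r [-> _]] := F_fin c 1 r1 c0 c1' (lexx 1) E1.
have f1 : forall c, 0 < c <= 1 -> 1 <= f c.
  by move=> c hc; rewrite -lee_fin -fin //; exact: F_ge1.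
have fp : forall c, 0 < c <= 1 -> 0 < f c.
  by move=> c hc; exact: lt_le_trans ltr01 (f1 _ hc).
have g0 : forall c, 0 < c <= 1 -> 0 <= ln (f c) by move=> c hc; rewrite ln_ge0 // f1.
have gm : forall c c', 0 < c -> c < c' -> c' <= 1 ->
    ln (f c') <= ln (f c) /\ c * ln (f c) <= c' * ln (f c').
  move=> c c' c0 cc c1.
  have h1 : 0 < c <= 1 by rewrite c0 (le_trans (ltW cc)).
  have h2 : 0 < c' <= 1 by rewrite (lt_trans c0 cc).
  split.
    rewrite ler_ln ?posrE ?fp // -lee_fin -(fin _ h1) -(fin _ h2).
    exact: F_anti (ltW cc) c1.
  have [r [hr H]] := F_fin c c' (f c') c0 cc c1 (fin _ h2).
  by move: hr; rewrite fin // => -[->].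
have hA2 : forall c : R, `]0, 1] c -> 0 < c <= 1 by move=> c; rewrite /= in_itv.
apply: (subspace_eq_continuous (f := fun c => (expR (ln (f c)))%:E)).
  by move=> c /hA hc; rewrite lnK ?posrE ?fp // /from_subspace fin.
apply/subspace_continuousP => c /hA2 hc.
apply/fine_cvgP; split; first exact: nearW.
apply: (cvg_comp _ _ (cont_g R (fun c => ln (f c)) c hc g0 gm)); exact: continuous_expR.
Qed.
End Alpha.

Theorem proposition3p5 (R : realType) :
  {ae (@lebesgue_measure R), forall alpha : R,
      0 < alpha < 1 -> (@irrational R) alpha ->
      forall c : R, 0 < c <= 1 -> Fplus alpha c = Fminus alpha c} ->
  {ae (@lebesgue_measure R), forall alpha : R,
      0 < alpha < 1 -> (@irrational R) alpha ->
      {within `]0, 1], continuous (Flim alpha)}}.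
Proof.
move=> H; apply: filterS H; first exact: (ae_filter_ringOfSetsType (@lebesgue_measure R)).
move=> alpha Ha h01 hirr.
exact: (Flim_cont _ _ h01 hirr (Ha h01 hirr)).
Qed.
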